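(* Let $K$ be an arbitrary valued field, $d\ge1$, and let $C\subseteq K^d$ be the convex hull of a finite set, with $0\in C$. Then there exist a complete flag of $K$-linear subspaces $\{0\}\subsetneq F_1\subsetneq\dots\subsetneq F_d=K^d$ and elements $\gamma_1\le\gamma_2\le\dots\le\gamma_d$ of $\Gamma\cup\{\infty\}$ such that $$C=\{v_1+\dots+v_d:\ v_i\in F_i,\ \nu_{K^d}(v_i)\ge\gamma_i\text{ for all } i\}.$$
   Context: $K$ is a field with valuation $\nu:K\to\Gamma\cup\{\infty\}$, valuation ring $\mathcal{O}$. On $K^d$, $\nu_{K^d}(x_1,\dots,x_d)=\min_i\nu(x_i)$. For $Y\subseteq K^d$, $\operatorname{conv}(Y)=\{\sum_{i=1}^n\alpha_iy_i: n\ge1, y_i\in Y,\alpha_i\in\mathcal{O},\sum_i\alpha_i=1\}$. *)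

(* Defs.v *)
From mathcomp Require Import all_boot all_order all_algebra.
Set Implicit Arguments. Unset Strict Implicit. Unset Printing Implicit Defensive.
Import GRing.Theory.
Local Open Scope ring_scope.

Record ordered_abelian_group (G : zmodType) (le : rel G) : Prop := {
  oag_refl : forall a, le a a;
  oag_antisym : forall a b, le a b -> le b a -> a = b;
  oag_trans : forall a b c, le a b -> le b c -> le a c;
  oag_total : forall a b, le a b || le b a;
  oag_add : forall a b c, le a b -> le (a + c) (b + c) }.

(* Gamma ∪ {∞} is modelled by option G, with None = ∞. *)
Definition leE (G : zmodType) (le : rel G) (x y : option G) : bool :=
  match x, y with
  | _, None => true
  | None, Some _ => false
  | Some a, Some b => le a b
  end.

Definition addE (G : zmodType) (x y : option G) : option G :=
  match x, y with
  | Some a, Some b => Some (a + b)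
  | _, _ => None
  end.

Definition minE (G : zmodType) (le : rel G) (x y : option G) : option G :=
  if leE le x y then x else y.

Record is_valuation (K : fieldType) (G : zmodType) (le : rel G)
    (nu : K -> option G) : Prop := {
  val_inf : forall x, nu x = None <-> x = 0;
  val_mul : forall x y, nu (x * y) = addE (nu x) (nu y);
  val_add : forall x y, leE le (minE le (nu x) (nu y)) (nu (x + y)) }.

Definition val_ring (K : fieldType) (G : zmodType) (le : rel G)
    (nu : K -> option G) (x : K) : Prop := leE le (Some 0) (nu x).

Definition nuKd (K : fieldType) (G : zmodType) (le : rel G)
    (nu : K -> option G) (d : nat) (v : 'rV[K]_d) : option G :=
  \big[minE le/None]_(i < d) nu (v 0 i).

Definition conv (K : fieldType) (G : zmodType) (le : rel G)
    (nu : K -> option G) (d : nat) (Y : 'rV[K]_d -> Prop) (v : 'rV[K]_d) : Prop :=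
  exists (n : nat) (y : 'I_n -> 'rV[K]_d) (alpha : 'I_n -> K),
    [/\ (1 <= n)%N, forall i, Y (y i), forall i, val_ring le nu (alpha i),
        \sum_(i < n) alpha i = 1 & v = \sum_(i < n) alpha i *: y i].

(* Main.v *)
Require Import Defs.
From mathcomp Require Import all_boot all_order all_algebra.
Set Implicit Arguments. Unset Strict Implicit. Unset Printing Implicit Defensive.
Import GRing.Theory.
Local Open Scope ring_scope.

Section Val.
Variables (K : fieldType) (G : zmodType) (le : rel G) (nu : K -> option G).
Hypothesis HG : ordered_abelian_group le.
Hypothesis Hnu : is_valuation le nu.

Notation leE := (leE le).
Notation O := (val_ring le nu).

Lemma leE_refl x : leE x x.
Proof. by case: x => //= a; apply: (oag_refl HG). Qed.

Lemma leE_trans x y z : leE x y -> leE y z -> leE x z.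
Proof.
case: x; case: y; case: z => //= c b a; exact: (oag_trans HG).
Qed.

Lemma leE_total x y : leE x y || leE y x.
Proof. case: x; case: y => //= b a; exact: (oag_total HG). Qed.

Lemma leE_minE g a b : leE g (minE le a b) = leE g a && leE g b.
Proof.
rewrite /minE; case: ifP => h.
  apply/idP/andP => [H|[]//]; split=> //; exact: leE_trans H h.
apply/idP/andP => [H|[]//]; split=> //.
have := leE_total a b; rewrite h /= => h2; exact: leE_trans H h2.
Qed.

Lemma leE_antisym x y : leE x y -> leE y x -> x = y.
Proof.
case: x; case: y => //= b a h1 h2; congr Some; exact: (oag_antisym HG).
Qed.

Lemma le_addr (a b c : G) : le (a + c) (b + c) -> le a b.
Proof.
move=> h; have := oag_add HG (- c) h; by rewrite -!addrA subrr !addr0.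
Qed.

Lemma nu0 : nu 0 = None.
Proof. by apply/(val_inf Hnu). Qed.

Lemma nuNone x : (nu x = None) <-> x = 0.
Proof. exact: (val_inf Hnu). Qed.

Lemma double0 {a : G} : a + a = 0 -> a = 0.
Proof.
move=> h; have := oag_total HG 0 a; case/orP => h1.
  have h2 := oag_add HG a h1; rewrite add0r h in h2.
  exact: (oag_antisym HG).
have h2 := oag_add HG a h1; rewrite add0r h in h2.
exact: (oag_antisym HG).
Qed.

Lemma nu1 : nu 1 = Some 0.
Proof.
have := val_mul Hnu 1 1; rewrite mulr1.
case E: (nu 1) => [a|] /=.
  by move=> [] h; congr Some; apply: (addrI a); rewrite addr0 -h.
by move/nuNone: E => /eqP; rewrite oner_eq0.
Qed.

Lemma nuN1 : nu (-1) = Some 0.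
Proof.
have := val_mul Hnu (-1) (-1); rewrite mulrNN mulr1 nu1.
case E: (nu (-1)) => [a|] //= [] h; by rewrite (double0 (esym h : a + a = 0)).
Qed.

Lemma nuN x : nu (- x) = nu x.
Proof.
by rewrite -mulN1r (val_mul Hnu) nuN1; case: (nu x) => //= a; rewrite add0r.
Qed.

Lemma nuM x y : nu (x * y) = addE (nu x) (nu y).
Proof. exact: (val_mul Hnu). Qed.

Lemma nuD g x y : leE g (nu x) -> leE g (nu y) -> leE g (nu (x + y)).
Proof.
move=> h1 h2; apply: leE_trans (val_add Hnu x y).
by rewrite leE_minE h1 h2.
Qed.

Lemma nuB g x y : leE g (nu x) -> leE g (nu y) -> leE g (nu (x - y)).
Proof. by move=> h1 h2; apply: nuD => //; rewrite nuN. Qed.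

Lemma addE_mono c a b : leE a b -> leE (addE c a) (addE c b).
Proof.
case: c; case: a; case: b => //= b a c h.
by rewrite ![c + _]addrC; apply: (oag_add HG).
Qed.

Lemma addE_ge g a b : leE (Some 0) a -> leE g b -> leE g (addE a b).
Proof.
case: a; case: b; case: g => //= g b a h1 h2.
apply: (oag_trans HG) h2 _.
have := oag_add HG b h1; by rewrite add0r.
Qed.

Lemma addE_cancel l g : leE (Some g) (addE l (Some g)) -> leE (Some 0) l.
Proof.
case: l => //= l h; apply: (@le_addr 0 l g); by rewrite add0r.
Qed.

Lemma O0 : O 0. Proof. by rewrite /val_ring nu0. Qed.
Lemma O1 : O 1. Proof. by rewrite /val_ring nu1 /=; apply: (oag_refl HG). Qed.
Lemma OD a b : O a -> O b -> O (a + b). Proof. exact: nuD. Qed.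
Lemma ON a : O a -> O (- a). Proof. by rewrite /val_ring nuN. Qed.
Lemma OB a b : O a -> O b -> O (a - b). Proof. by move=> *; apply: OD => //; apply: ON. Qed.
Lemma OM a b : O a -> O b -> O (a * b).
Proof. by rewrite /val_ring nuM => h1 h2; apply: addE_ge. Qed.
Lemma Osum (I : finType) (P : pred I) (f : I -> K) :
  (forall i, O (f i)) -> O (\sum_(i | P i) f i).
Proof. move=> h; elim/big_ind: _ => //; [exact: O0|exact: OD]. Qed.

End Val.


Section Ball.
Variables (K : fieldType) (G : zmodType) (le : rel G) (nu : K -> option G).
Hypothesis HG : ordered_abelian_group le.
Hypothesis Hnu : is_valuation le nu.
Variable d : nat.

Notation O := (val_ring le nu).

Definition ball g (v : 'rV[K]_d) := forall i, leE le g (nu (v 0 i)).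
Definition supp (J : {set 'I_d}) (v : 'rV[K]_d) := forall i, i \notin J -> v 0 i = 0.
Definition ospan n (y : 'I_n -> 'rV[K]_d) v :=
  exists a : 'I_n -> K, (forall i, O (a i)) /\ v = \sum_i a i *: y i.
Definition Omod (M : 'rV[K]_d -> Prop) :=
  [/\ M 0, forall a b, M a -> M b -> M (a + b) & forall c a, O c -> M a -> M (c *: a)].

Lemma ball0 g : ball g 0.
Proof. by move=> i; rewrite mxE (nu0 Hnu); case: g. Qed.
Lemma ballD g a b : ball g a -> ball g b -> ball g (a + b).
Proof. by move=> h1 h2 i; rewrite mxE; apply: (nuD HG Hnu). Qed.
Lemma ballN g a : ball g a -> ball g (- a).
Proof. by move=> h i; rewrite mxE (nuN HG Hnu). Qed.
Lemma ballB g a b : ball g a -> ball g b -> ball g (a - b).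
Proof. by move=> h1 h2; apply: ballD => //; apply: ballN. Qed.
Lemma ballZ g c a : O c -> ball g a -> ball g (c *: a).
Proof. by move=> h1 h2 i; rewrite mxE (nuM Hnu); apply: (addE_ge HG). Qed.
Lemma ball_le g g' a : leE le g' g -> ball g a -> ball g' a.
Proof. by move=> h1 h2 i; apply: (leE_trans HG) h1 (h2 i). Qed.
Lemma ball_sum g (I : finType) (P : pred I) (f : I -> 'rV[K]_d) :
  (forall i, ball g (f i)) -> ball g (\sum_(i | P i) f i).
Proof. move=> h; elim/big_ind: _ => //; [exact: ball0|exact: ballD]. Qed.

Lemma ball_nuKd g v : leE le g (nuKd le nu v) <-> ball g v.
Proof.
rewrite /nuKd /ball.
rewrite (big_morph (leE le g) (id1 := true) (op1 := andb)); last first.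
- by case: g.
- by move=> x y; rewrite (leE_minE HG).
rewrite big_andE; split.
  by move/forallP.
by move=> h; apply/forallP.
Qed.

Lemma Omod_sum M (I : finType) (P : pred I) (f : I -> 'rV[K]_d) :
  Omod M -> (forall i, P i -> M (f i)) -> M (\sum_(i | P i) f i).
Proof. by case=> h0 hD _ h; elim/big_ind: _. Qed.

Lemma ospan_Omod n (y : 'I_n -> 'rV[K]_d) : Omod (ospan y).
Proof.
split.
- exists (fun _ => 0); split=> [i|]; first exact: (O0 Hnu).
  by rewrite big1 // => i _; rewrite scale0r.
- move=> a b [al [h1 ->]] [be [h2 ->]]; exists (fun i => al i + be i); split.
    by move=> i; apply: (OD HG Hnu).
  by rewrite -big_split /=; apply: eq_bigr => i _; rewrite scalerDl.
- move=> c a hc [al [h1 ->]]; exists (fun i => c * al i); split.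
    by move=> i; apply: (OM HG Hnu).
  by rewrite scaler_sumr; apply: eq_bigr => i _; rewrite scalerA.
Qed.

Lemma ospan_gen n (y : 'I_n -> 'rV[K]_d) j : ospan y (y j).
Proof.
exists (fun i => (i == j)%:R); split.
  by move=> i; case: (i == j); [exact: (O1 HG Hnu)|exact: (O0 Hnu)].
rewrite (bigD1 j) //= eqxx scale1r big1 ?addr0 // => i /negbTE ->.
by rewrite scale0r.
Qed.

Lemma ospan_min M n (y : 'I_n -> 'rV[K]_d) :
  Omod M -> (forall j, M (y j)) -> forall v, ospan y v -> M v.
Proof.
move=> hM hy v [a [ha ->]]; apply: Omod_sum => // i _.
by case: hM => _ _ hZ; apply: hZ.
Qed.

End Ball.


Section Step.
Variables (K : fieldType) (G : zmodType) (le : rel G) (nu : K -> option G).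
Hypothesis HG : ordered_abelian_group le.
Hypothesis Hnu : is_valuation le nu.
Variable d : nat.

Notation O := (val_ring le nu).
Notation ball := (@ball K G le nu d).
Notation supp := (@supp K d).
Notation Omod := (@Omod K G le nu d).

Definition Result (J : {set 'I_d}) (m : nat) (M : 'rV[K]_d -> Prop) (b : option G) :=
  exists (F : nat -> {vspace 'rV[K]_d}) (ga : nat -> option G),
  [/\ F 0%N = 0%VS,
      forall i, (1 <= i <= m)%N -> (F i.-1 <= F i)%VS /\ F i.-1 != F i,
      forall i, (i <= m)%N -> forall x, x \in F i -> supp J x,
      forall x, supp J x -> x \in F m &
      [/\ forall i, (1 <= i < m)%N -> leE le (ga i) (ga i.+1),
      forall i, (1 <= i <= m)%N -> leE le b (ga i) &
      forall v, M v <-> exists w : nat -> 'rV[K]_d,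
          (forall i, (1 <= i <= m)%N -> w i \in F i /\ ball (ga i) (w i)) /\
          v = \sum_(1 <= i < m.+1) w i]].

Lemma Omod_sumr M (I : Type) (r : seq I) (P : pred I) (f : I -> 'rV[K]_d) :
  Omod M -> (forall i, P i -> M (f i)) -> M (\sum_(i <- r | P i) f i).
Proof. by case=> h0 hD _ h; elim/big_ind: _. Qed.

Lemma supp0 (J : {set 'I_d}) : supp J 0. Proof. by move=> i _; rewrite mxE. Qed.
Lemma suppD (J : {set 'I_d}) (a b : 'rV[K]_d) : supp J a -> supp J b -> supp J (a + b).
Proof. by move=> h1 h2 i hi; rewrite mxE h1 // h2 // addr0. Qed.
Lemma suppZ (J : {set 'I_d}) (c : K) (a : 'rV[K]_d) : supp J a -> supp J (c *: a).
Proof. by move=> h i hi; rewrite mxE h // mulr0. Qed.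
Lemma supp_sub (J J' : {set 'I_d}) (a : 'rV[K]_d) : J' \subset J -> supp J' a -> supp J a.
Proof.
move=> hs h i hi; apply: h; apply: contra hi; exact: (subsetP hs).
Qed.

Lemma dec_line (U : {vspace 'rV[K]_d}) (v0 x : 'rV[K]_d) k :
  (forall y, y \in U -> y 0 k = 0) -> v0 0 k != 0 ->
  x \in (<[v0]> + U)%VS -> x - (x 0 k / v0 0 k) *: v0 \in U.
Proof.
move=> hU hv /memv_addP [u /vlineP [mu ->] [y hy ->]].
have -> : (mu *: v0 + y) 0 k / v0 0 k = mu.
  by rewrite !mxE (hU _ hy) addr0 mulfK.
by rewrite addrC addKr.
Qed.

Lemma coordZ (c : K) (a : 'rV[K]_d) i : (c *: a) 0 i = c * a 0 i.
Proof. by rewrite mxE. Qed.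

Variables (J : {set 'I_d}) (k : 'I_d) (m : nat) (v0 : 'rV[K]_d) (g1 b : option G)
  (M M' : 'rV[K]_d -> Prop).
Hypotheses (hk : k \in J) (hv0 : supp J v0) (hv0k : v0 0 k != 0)
  (hmin : forall i, leE le (nu (v0 0 k)) (nu (v0 0 i))) (hb : leE le b g1)
  (hM : Omod M) (hM'M : forall x, M' x -> M x)
  (hB : forall l, ball g1 (l *: v0) -> M (l *: v0))
  (hdec : forall x, M x -> exists l m', [/\ ball g1 (l *: v0), M' m' & x = l *: v0 + m'])
  (IH : Result (J :\ k) m M' g1).

Lemma step : Result J m.+1 M b.
Proof.
have [F' [ga' [F0 Fch Fsupp Ffull [gch gb Mchar]]]] := IH.
have Fk : forall i, (i <= m)%N -> forall y, y \in F' i -> y 0 k = 0.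
  move=> i hi y hy; apply: (Fsupp i hi y hy); by rewrite in_setD1 eqxx.
have FsJ : forall i, (i <= m)%N -> forall y, y \in F' i -> supp J y.
  move=> i hi y hy; apply: (supp_sub (J' := J :\ k)); first exact: subsetDl.
  exact: Fsupp hy.
have v0n0 : v0 != 0.
  by apply: contraNneq hv0k => ->; rewrite mxE.
pose F i := if i is i'.+1 then (<[v0]> + F' i')%VS else 0%VS.
pose ga i := match i with 0%N => g1 | 1%N => g1 | i'.+1 => ga' i' end.
exists F, ga; split => //.
- case=> [//|i] /andP [_ hi]; rewrite /=; case: i hi => [|j] hi /=.
    split; first exact: sub0v.
    apply/eqP => h; have : v0 \in F 1%N by rewrite /= F0 addv0 memv_line.
    by rewrite /= -h memv0 (negbTE v0n0).
  have [h1 h2] := Fch j.+1 hi.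
  split; first by apply: addvS => //; exact: subvv.
  apply: contra h2 => /eqP h; rewrite eqEsubv h1 /=.
  apply/subvP => x hx.
  have hx' : x \in (<[v0]> + F' j)%VS by rewrite h -[x]add0r memv_add ?mem0v.
  have hi' : (j.+1 <= m)%N by [].
  have := dec_line (Fk j (ltnW hi')) hv0k hx'.
  by rewrite (Fk _ hi' _ hx) mul0r scale0r subr0.
- case=> [_ x|i hi x]; first by rewrite /= memv0 => /eqP ->; exact: supp0.
  rewrite /= => /memv_addP [u /vlineP [mu ->] [y hy ->]].
  apply: suppD; first exact: suppZ.
  exact: (FsJ i hi).
- move=> x hx; rewrite /=.
  have -> : x = (x 0 k / v0 0 k) *: v0 + (x - (x 0 k / v0 0 k) *: v0).
    by rewrite addrC subrK.
  apply: memv_add; first by apply: memvZ; exact: memv_line.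
  apply: Ffull => i; rewrite in_setD1 negb_and negbK => /orP [/eqP ->|hi].
    by rewrite !mxE divfK // subrr.
  by rewrite !mxE (hx _ hi) (hv0 hi) mulr0 subrr.
split.
- case=> [//|[|i]] /andP [_ hi] /=.
    by apply: gb; rewrite /= ltnS in hi; rewrite hi.
  by apply: gch; rewrite /= ltnS in hi; rewrite hi.
- case=> [//|[|i]] /andP [_ hi] //=.
  apply: (leE_trans HG) hb _; apply: gb; by rewrite /=.
move=> v; split.
- move/hdec => [l [m' [hl hm' ->]]].
  have [w' [hw' ->]] := (Mchar m').1 hm'.
  pose w i := match i with 0%N => 0 | 1%N => l *: v0 | i'.+1 => w' i' end.
  exists w; split.
    case=> [//|[|i]] /andP [_ hi] /=.
      split=> //; rewrite F0 addv0; apply: memvZ; exact: memv_line.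
    have [h1 h2] := hw' i.+1 hi; split=> //.
    rewrite -[w' _]add0r; apply: memv_add => //; exact: mem0v.
  rewrite [RHS]big_ltn // [in RHS]big_add1 /=; congr (_ + _).
  apply: eq_big_nat => i /andP [hi _].
  by case: i hi.
- move=> [w [hw ->]].
  have hw1 := hw 1%N isT.
  rewrite big_ltn // big_add1 /=.
  pose lam i := w i.+1 0 k / v0 0 k.
  pose y i := w i.+1 - lam i *: v0.
  have hy : forall i, (1 <= i <= m)%N -> y i \in F' i.
    move=> i /andP [h1 h2]; apply: dec_line; [exact: (Fk i h2)|exact: hv0k|].
    by have [] := hw i.+1 h2.
  have hlam : forall i, (1 <= i <= m)%N -> ball (ga' i) (lam i *: v0).
    move=> [//|i] hi j; have [_ hb'] := hw i.+2 (proj2 (andP hi)).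
    have := hb' k; rewrite /= coordZ.
    have -> : w i.+2 0 k = lam i.+1 * v0 0 k by rewrite /lam divfK.
    move=> h; apply: (leE_trans HG) h _.
    rewrite !(nuM Hnu); exact: (addE_mono HG).
  have -> : \sum_(1 <= i < m.+1) w i.+1 =
            \sum_(1 <= i < m.+1) lam i *: v0 + \sum_(1 <= i < m.+1) y i.
    by rewrite -big_split /=; apply: eq_bigr => i _; rewrite /y addrC subrK.
  have := hM; rewrite /Omod => -[h0 hD hZ].
  apply: (hD); last apply: (hD).
  + case: hw1 => /= h1 h2.
    have := dec_line (Fk 0%N (leq0n _)) hv0k h1.
    rewrite F0 memv0 subr_eq0 => /eqP E; rewrite E; apply: hB; by rewrite -E.
  + rewrite big_nat_cond; apply: Omod_sumr => //.
    move=> i; rewrite andbT => /andP [h1 h2]; rewrite ltnS in h2.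
    apply: hB; apply: (ball_le HG (g := ga' i)); first by apply: gb; rewrite h1.
    by apply: hlam; rewrite h1.
  + apply: hM'M; apply/(Mchar _).2; exists y; split=> //.
    move=> i hi; split; first exact: hy.
    case: i hi => [//|i] hi.
    have [_ hb'] := hw i.+2 (proj2 (andP hi)); apply: ballB => //.
    exact: hlam.
Qed.

End Step.


Section Core.
Variables (K : fieldType) (G : zmodType) (le : rel G) (nu : K -> option G).
Hypothesis HG : ordered_abelian_group le.
Hypothesis Hnu : is_valuation le nu.
Variable d : nat.

Notation O := (val_ring le nu).
Notation ball := (@ball K G le nu d).
Notation supp := (@supp K d).
Notation Omod := (@Omod K G le nu d).
Notation ospan := (@ospan K G le nu d).
Notation Result := (@Result K G le nu d).

Lemma exists_min (T : finType) (f : T -> option G) (t0 : T) :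
  exists t, forall t', leE le (f t) (f t').
Proof.
have : exists t, forall t', t' \in t0 :: enum T -> leE le (f t) (f t').
  elim: (enum T) => [|x s [t ht]].
    by exists t0 => t'; rewrite inE => /eqP ->; exact: (leE_refl HG).
  case/orP: (leE_total HG (f t) (f x)) => h.
    exists t => t'; rewrite !inE => /or3P [/eqP ->| /eqP ->|hs].
    - by apply: ht; rewrite inE eqxx.
    - exact: h.
    - by apply: ht; rewrite inE hs orbT.
  exists x => t'; rewrite !inE => /or3P [/eqP ->| /eqP ->|hs].
  - by apply: (leE_trans HG) h (ht _ _); rewrite inE eqxx.
  - exact: (leE_refl HG).
  - by apply: (leE_trans HG) h (ht _ _); rewrite inE hs orbT.
move=> [t ht]; exists t => t'; apply: ht; by rewrite inE mem_enum orbT.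
Qed.

Lemma supp_set0 (x : 'rV[K]_d) : supp set0 x -> x = 0.
Proof.
move=> h; apply/matrixP => i j; rewrite (ord1 i) [RHS]mxE; apply: h.
by rewrite in_set0.
Qed.

Lemma leE_None x : leE le None x -> x = None.
Proof. by case: x. Qed.

Lemma core m : forall (J : {set 'I_d}), #|J| = m ->
  forall n (y : 'I_n -> 'rV[K]_d) b,
  (forall j, supp J (y j) /\ ball b (y j)) -> Result J m (ospan y) b.
Proof.
elim: m => [|m IH] J hJ n y b hy.
  have J0 := cards0_eq hJ; subst J.
  have y0 : forall j, y j = 0 by move=> j; apply: supp_set0; exact: (hy j).1.
  exists (fun _ => 0%VS), (fun _ => b); split => //.
  - by case=> [|i].
  - move=> i _ x; rewrite memv0 => /eqP ->; exact: supp0.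
  - by move=> x /supp_set0 ->; exact: mem0v.
  split => //; [by case=> [|[|i]] | by move=> i _; exact: (leE_refl HG)|].
  move=> v; split.
    move=> [a [_ ->]]; exists (fun _ => 0); split => //.
    - by case=> [|i].
    rewrite [RHS]big_geq // big1 // => i _; by rewrite y0 scaler0.
  move=> [w [_ ->]]; rewrite big_geq //.
  by have [] := ospan_Omod HG Hnu y.
have ospM := ospan_Omod HG Hnu y.
have [osp0 ospD ospZ] := ospM.
case: (boolP [exists j, exists i, y j 0 i != 0]) => [/existsP [j1 /existsP [i1 hji]] | hall].
- have [[j0 k] hmin'] := exists_min (fun p : 'I_n * 'I_d => nu (y p.1 0 p.2)) (j1, i1).
  have {}hmin' : forall j i, leE le (nu (y j0 0 k)) (nu (y j 0 i)) := fun j i => hmin' (j, i).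
  pose v0 := y j0.
  have hv0k : v0 0 k != 0.
    apply: contra_neq hji => h; apply/(nuNone Hnu); apply: leE_None.
    by rewrite -(nu0 Hnu) -h; exact: hmin'.
  case E : (nu (v0 0 k)) => [gg|]; last by move/(nuNone Hnu): E => /eqP; rewrite (negbTE hv0k).
  have hk : k \in J.
    apply: contraNT hv0k => hk; apply/eqP; exact: (hy j0).1.
  have bv0 : ball (Some gg) v0 by move=> i; rewrite -E; exact: hmin'.
  pose c j := y j 0 k / v0 0 k.
  have hc : forall j, O (c j).
    move=> j; apply: (addE_cancel HG (g := gg)); rewrite -E -(nuM Hnu).
    by rewrite /c divfK // E -E; exact: hmin'.
  pose y' j := y j - c j *: v0.
  apply: (step HG Hnu (k := k) (v0 := v0) (g1 := Some gg) (M' := ospan y')) => //.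
  + exact: (hy j0).1.
  + by move=> i; exact: hmin'.
  + rewrite -E; have := (hy j0).2 k; done.
  + apply: ospan_min => // j; rewrite /y' -scaleNr; apply: ospD; first exact: (ospan_gen HG Hnu).
    by apply: ospZ; [exact: (ON HG Hnu)|exact: (ospan_gen HG Hnu)].
  + move=> l hl; apply: ospZ; last exact: (ospan_gen HG Hnu).
    apply: (addE_cancel HG (g := gg)); rewrite -E -(nuM Hnu).
    by have := hl k; rewrite coordZ => h; rewrite E.
  + move=> x hx.
    pose P x := exists l m', [/\ O l, ospan y' m' & x = l *: v0 + m'].
    have : P x.
      apply: (ospan_min (le := le) (nu := nu) (y := y) _ _ hx).
        have [o0 oD oZ] := ospan_Omod HG Hnu y'.
        split.
        * exists 0, 0; split => //; [exact: (O0 Hnu)|by rewrite scale0r addr0].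
        * move=> a1 a2 [l1 [m1 [h1 h2 ->]]] [l2 [m2 [h3 h4 ->]]].
          exists (l1 + l2), (m1 + m2); split; [exact: (OD HG Hnu)|exact: oD|].
          by rewrite scalerDl addrACA.
        * move=> c0 a1 hc0 [l1 [m1 [h1 h2 ->]]].
          exists (c0 * l1), (c0 *: m1); split; [exact: (OM HG Hnu hc0 h1)|exact: (oZ _ _ hc0 h2)|].
          by rewrite scalerDr scalerA.
      move=> j; exists (c j), (y' j); split; [exact: hc|exact: (ospan_gen HG Hnu)|].
      by rewrite /y' addrC subrK.
    move=> [l [m' [hl hm' ->]]]; exists l, m'; split => //.
    exact: (ballZ HG Hnu hl bv0).
  + apply: IH.
      by move: hJ; rewrite (cardsD1 k J) hk => -[].
    move=> j; split.
      move=> i; rewrite in_setD1 negb_and negbK => /orP [/eqP ->|hi].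
        by rewrite /y' !mxE /c divfK // subrr.
      by rewrite /y' !mxE ((hy j).1 _ hi) ((hy j0).1 _ hi) mulr0 subrr.
    apply: (ballB HG Hnu); last exact: (ballZ HG Hnu (hc j) bv0).
    by move=> i; rewrite -E; exact: hmin'.
- have y0 : forall j, y j = 0.
    move=> j; apply/matrixP => i0 i; rewrite (ord1 i0) [RHS]mxE.
    apply/eqP; apply: contraNT hall => h; apply/existsP; exists j; apply/existsP; by exists i.
  have osp0' : forall x, ospan y x -> x = 0.
    by move=> x [a [_ ->]]; rewrite big1 // => j _; rewrite y0 scaler0.
  have /set0Pn [k hk] : J != set0 by rewrite -card_gt0 hJ.
  pose v0 : 'rV[K]_d := delta_mx 0 k.
  have v0E : forall i, v0 0 i = (i == k)%:R by move=> i; rewrite mxE eqxx.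
  apply: (step HG Hnu (k := k) (v0 := v0) (g1 := None) (M' := ospan y)) => //.
  + by move=> i hi; rewrite v0E; case: eqP => // E; rewrite E hk in hi.
  + by rewrite v0E eqxx oner_eq0.
  + move=> i; rewrite !v0E eqxx; case: (i == k); first exact: (leE_refl HG).
    by rewrite (nu0 Hnu) (nu1 Hnu).
  + by case: b hy.
  + move=> l hl; have := hl k; rewrite coordZ v0E eqxx mulr1 => /leE_None.
    by move/(nuNone Hnu) ->; rewrite scale0r.
  + move=> x /osp0' ->; exists 0, 0; split => //; last by rewrite scale0r addr0.
    by rewrite scale0r; exact: (ball0 Hnu).
  + apply: IH.
      by move: hJ; rewrite (cardsD1 k J) hk => -[].
    by move=> j; rewrite y0; split; [exact: supp0|exact: (ball0 Hnu)].
Qed.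

End Core.


Section Conv.
Variables (K : fieldType) (G : zmodType) (le : rel G) (nu : K -> option G).
Hypothesis HG : ordered_abelian_group le.
Hypothesis Hnu : is_valuation le nu.
Variable d : nat.

Notation O := (val_ring le nu).

Lemma canon (S : seq 'rV[K]_d) v : conv le nu (fun x => x \in S) v ->
  exists a : 'I_(size S) -> K, [/\ forall i, O (a i), \sum_i a i = 1 &
     v = \sum_i a i *: nth 0 S i].
Proof.
move=> [n [x [al [hn hx hal hsum ->]]]].
have P : forall j, (index (x j) S < size S)%N by move=> j; rewrite index_mem.
pose p j : 'I_(size S) := Ordinal (P j).
exists (fun i => \sum_(j | p j == i) al j); split.
- by move=> i; apply: (Osum HG Hnu).
- by rewrite -hsum (partition_big p predT).
- rewrite (partition_big p predT) //; apply: eq_bigr => i _.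
  rewrite scaler_suml; apply: eq_bigr => j /eqP <-.
  by rewrite /= nth_index.
Qed.

Lemma conv_ospan (S : seq 'rV[K]_d) (hS0 : conv le nu (fun x => x \in S) 0) v :
  conv le nu (fun x => x \in S) v <->
  ospan le nu (fun i : 'I_(size S) => nth 0 S i - nth 0 S 0) v.
Proof.
have [a0 [ha0 hs0 h0]] := canon hS0.
set s0 := nth 0 S 0.
split.
- move/canon => [a [ha hs ->]].
  exists (fun i => a i - a0 i); split.
    by move=> i; apply: (OB HG Hnu).
  symmetry.
  rewrite (eq_bigr (fun i => (a i - a0 i) *: nth 0 S i - (a i - a0 i) *: s0));
    last by move=> i _; rewrite /= scalerBr.
  rewrite sumrB -scaler_suml sumrB hs hs0 subrr scale0r subr0.
  rewrite (eq_bigr (fun i => a i *: nth 0 S i - a0 i *: nth 0 S i));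
    last by move=> i _; rewrite /= scalerBl.
  by rewrite sumrB -h0 subr0.
- move=> [b [hb ->]].
  have hsz : (0 < size S)%N.
    move: hS0 => [n [x [_ [hn hx _ _ _]]]].
    by rewrite -has_predT; apply/hasP; exists (x (Ordinal hn)).
  pose i0 : 'I_(size S) := Ordinal hsz.
  pose c i := b i + a0 i - (if i == i0 then \sum_j b j else 0).
  exists (size S), (fun i => nth 0 S i), c; split => //.
  + by move=> i; rewrite mem_nth.
  + move=> i; apply: (OB HG Hnu); first exact: (OD HG Hnu).
    by case: ifP => _; [exact: (Osum HG Hnu)|exact: (O0 Hnu)].
  + rewrite sumrB big_split /= hs0 -big_mkcond big_pred1_eq.
    by rewrite addrAC subrr add0r.
  + symmetry; rewrite (eq_bigr (fun i => (b i + a0 i) *: nth 0 S i -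
       (if i == i0 then (\sum_j b j) *: nth 0 S i else 0))); last first.
      by move=> i _; rewrite scalerBl; case: ifP => _ //; rewrite scale0r.
    rewrite sumrB -big_mkcond big_pred1_eq.
    rewrite (eq_bigr (fun i => b i *: nth 0 S i + a0 i *: nth 0 S i));
      last by move=> i _; rewrite scalerDl.
    rewrite big_split /= -h0 addr0.
    rewrite [in RHS](eq_bigr (fun i => b i *: nth 0 S i - b i *: s0));
      last by move=> i _; rewrite /= scalerBr.
    by rewrite sumrB -scaler_suml.
Qed.

End Conv.

Unset Implicit Arguments.
Set Strict Implicit.

Theorem corollary3p14 (K : fieldType) (G : zmodType) (le : rel G)
    (nu : K -> option G) (d : nat)
    (HG : ordered_abelian_group le) (Hnu : is_valuation le nu)
    (Hd : (1 <= d)%N) (C : 'rV[K]_d -> Prop)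
    (HC : exists S : seq 'rV[K]_d,
        forall v, C v <-> conv le nu (fun y => y \in S) v)
    (H0 : C 0) :
  exists (F : nat -> {vspace 'rV[K]_d}) (gamma : nat -> option G),
    [/\ F 0%N = 0%VS,
        (forall i, (1 <= i <= d)%N -> (F i.-1 <= F i)%VS /\ F i.-1 != F i),
        F d = fullv,
        (forall i, (1 <= i < d)%N -> leE le (gamma i) (gamma i.+1)) &
        forall v, C v <->
          exists w : nat -> 'rV[K]_d,
            (forall i, (1 <= i <= d)%N ->
                w i \in F i /\ leE le (gamma i) (nuKd le nu (w i))) /\
            v = \sum_(1 <= i < d.+1) w i].
Proof.
have [S hS] := HC.
have hS0 : conv le nu (fun x => x \in S) 0 by apply/hS.
pose y := fun i : 'I_(size S) => nth 0 S i - nth 0 S 0.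
have hsz : (0 < size S)%N.
  move: hS0 => [n [x [_ [hn hx _ _ _]]]].
  by rewrite -has_predT; apply/hasP; exists (x (Ordinal hn)).
have [[j0 i0] hmin] := exists_min HG
   (fun p : 'I_(size S) * 'I_d => nu (y p.1 0 p.2)) (Ordinal hsz, Ordinal Hd).
have hT : #|[set: 'I_d]| = d by rewrite cardsT card_ord.
have [F [ga [F0 Fch _ Ffull [gch _ Mchar]]]] :=
  core HG Hnu hT (b := nu (y j0 0 i0))
    (fun j => conj (fun i (hi : i \notin setT) => False_ind _ (negP hi (in_setT i)))
                   (fun i => hmin (j, i))).
exists F, ga; split => //.
- apply/vspaceP => x; rewrite memvf; apply: Ffull => i; by rewrite in_setT.
- move=> v; split.
    move/hS/(conv_ospan HG Hnu hS0)/Mchar => -[w [hw ->]]; exists w; split => // i hi.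
    have [h1 h2] := hw i hi; split => //; exact: (proj2 (ball_nuKd nu HG _ _) h2).
  move=> [w [hw ->]]; apply/hS/(conv_ospan HG Hnu hS0)/Mchar; exists w; split => // i hi.
  have [h1 h2] := hw i hi; split => //; exact: (proj1 (ball_nuKd nu HG _ _) h2).
Qed.
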